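(* In the binary setting below, with $\mathrm{CL}_{\mathrm{induced}}:=-\mathbb{E}[\mathrm{Var}(S-C\mid S_B)]$ and $\mathrm{GL}_{\mathrm{induced}}:=\mathbb{E}[\mathrm{Var}(C\mid S_B)]$, $$-\mathbb{E}\Big[\sqrt{\mathrm{Var}(S\mid S_B)}\big(2\sqrt{C_B(1-C_B)}+\sqrt{\mathrm{Var}(S\mid S_B)}\big)\Big]\le\mathrm{CL}_{\mathrm{induced}}+\mathrm{GL}_{\mathrm{induced}}\le\mathbb{E}\Big[\sqrt{\mathrm{Var}(S\mid S_B)}\big(2\sqrt{C_B(1-C_B)}-\sqrt{\mathrm{Var}(S\mid S_B)}\big)\Big].$$ With $N$ equal-width bins, $$-\tfrac1N\mathbb{E}\big[\sqrt{C_B(1-C_B)}\big]-\tfrac{1}{4N^2}\le\mathrm{CL}_{\mathrm{induced}}+\mathrm{GL}_{\mathrm{induced}}\le\tfrac1N\mathbb{E}\big[\sqrt{C_B(1-C_B)}\big].$$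
   Context: Binary setting: $(X,Y)$ jointly distributed with $Y\in\{0,1\}$; $Q:=P(Y=1\mid X)$; $S=f(X)\in[0,1]$ is a classifier's confidence for the positive class; $C:=\mathbb{E}[Q\mid S]$. Given a partition of $[0,1]$ into interval bins $\mathcal{B}_j$, $S_B$ equals $\mathbb{E}[S\mid S\in\mathcal{B}_j]$ on $\{S\in\mathcal{B}_j\}$, and $C_B:=\mathbb{E}[Q\mid S_B]=\mathbb{E}[C\mid S_B]$. $\mathrm{Var}(\cdot\mid S_B)$ is the ordinary conditional variance. ''$N$ equal-width bins'' means the bins are the intervals of length $1/N$ partitioning $[0,1]$. *)

(* Defs.v *)
From HB Require Import structures.
From mathcomp Require Import all_boot all_order all_algebra.
From mathcomp Require Import all_classical all_reals all_analysis.
Set Implicit Arguments. Unset Strict Implicit. Unset Printing Implicit Defensive.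
Import Order.TTheory GRing.Theory Num.Theory.
Local Open Scope classical_set_scope.
Local Open Scope ring_scope.

Section defs.
Context {d : measure_display} {T : measurableType d} {R : realType}.
Variable P : probability T R.

Definition Ex (Z : T -> R) : R := fine (\int[P]_x (Z x)%:E)%E.

Definition is_cond_exp (Z : T -> R) {dU : measure_display} {U : measurableType dU}
  (W : T -> U) (V : T -> R) : Prop :=
  (exists g : U -> R, measurable_fun setT g /\ V = g \o W) /\
  P.-integrable setT (EFin \o V) /\
  forall A : set U, measurable A ->
    (\int[P]_(x in W @^-1` A) (Z x)%:E = \int[P]_(x in W @^-1` A) (V x)%:E)%E.

(* elementary conditional expectation given a discrete (finitely valued)
   random variable W:  E[Z | W](t) = E[Z 1_{W = W t}] / P(W = W t) *)
Definition cexpd (Z : T -> R) (W : T -> R) : T -> R :=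
  fun t => Ex (fun s => Z s * (W s == W t)%:R) / fine (P [set s | W s = W t]).

Definition cvard (Z : T -> R) (W : T -> R) : T -> R :=
  cexpd (fun s => (Z s - cexpd Z W s) ^+ 2) W.

Definition binavg (S : T -> R) (B : set R) : R :=
  Ex (fun s => S s * \1_B (S s)) / fine (P (S @^-1` B)).

Definition binned (S : T -> R) (n : nat) (B : 'I_n -> set R) : T -> R :=
  fun t => \sum_(j < n) \1_(B j) (S t) * binavg S (B j).

End defs.

Definition interval_partition {R : realType} (n : nat) (B : 'I_n -> set R) : Prop :=
  (forall j, is_interval (B j)) /\
  (forall i j, i != j -> B i `&` B j = set0) /\
  \bigcup_(j in [set: 'I_n]) B j = `[0, 1]%classic.

(* the bins are the intervals of length 1/N partitioning [0,1]
   (any endpoint convention): the j-th bin lies between ]j/N,(j+1)/N[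
   and [j/N,(j+1)/N] *)
Definition equal_width_bins {R : realType} (N : nat) (B : 'I_N -> set R) : Prop :=
  interval_partition B /\
  forall j : 'I_N,
    `](j%:R / N%:R), (j.+1%:R / N%:R)[%classic `<=` B j /\
    B j `<=` `[(j%:R / N%:R), (j.+1%:R / N%:R)]%classic.

(* Main.v *)
Require Import Defs.
From HB Require Import structures.
From mathcomp Require Import all_boot all_order all_algebra.
From mathcomp Require Import all_classical all_reals all_analysis.
From mathcomp Require Import ring lra.
Import Order.TTheory GRing.Theory Num.Theory.
Local Open Scope classical_set_scope.
Local Open Scope ring_scope.

Section tools.
Context {d : measure_display} {T : measurableType d} {R : realType}.
Variable P : probability T R.

Definition bm (Z : T -> R) := measurable_fun setT Z /\ exists M, forall t, `|Z t| <= M.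

Lemma bm_int {Z} : bm Z -> P.-integrable setT (EFin \o Z).
Proof.
case=> mZ [M hM]; apply: measurable_bounded_integrable => //.
- by have := probability_setT P; move=> /= ->; rewrite ltry.
- exists M; split; first exact: num_real.
  move=> y My x _ /=; exact: le_trans (hM x) (ltW My).
Qed.

Lemma bm_cst k : bm (fun _ => k).
Proof. by split; [exact: measurable_cst | exists `|k|]. Qed.

Lemma bmD Z1 Z2 : bm Z1 -> bm Z2 -> bm (fun t => Z1 t + Z2 t).
Proof.
case=> m1 [M1 h1] [m2 [M2 h2]]; split.
  exact: measurable_realfun.measurable_funD.
exists (M1 + M2) => t; apply: le_trans (ler_normD _ _) _; exact: lerD.
Qed.

Lemma bmN Z : bm Z -> bm (fun t => - Z t).
Proof.
case=> m [M h]; split; first exact: measurable_realfun.measurable_funN.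
by exists M => t; rewrite normrN.
Qed.

Lemma bmB Z1 Z2 : bm Z1 -> bm Z2 -> bm (fun t => Z1 t - Z2 t).
Proof. by move=> h1 h2; apply: bmD => //; apply: bmN. Qed.

Lemma bmM Z1 Z2 : bm Z1 -> bm Z2 -> bm (fun t => Z1 t * Z2 t).
Proof.
case=> m1 [M1 h1] [m2 [M2 h2]]; split.
  exact: measurable_realfun.measurable_funM.
exists (`|M1| * `|M2|) => t; rewrite normrM; apply: ler_pM => //.
  exact: le_trans (h1 t) (ler_norm _).
exact: le_trans (h2 t) (ler_norm _).
Qed.

Lemma bm_sum (I : Type) (r : seq I) (F : I -> T -> R) :
  (forall i, bm (F i)) -> bm (fun t => \sum_(i <- r) F i t).
Proof.
move=> hF; elim: r => [|i r IH].
  by under eq_fun do rewrite big_nil; exact: bm_cst.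
under eq_fun do rewrite big_cons; exact: bmD.
Qed.

Lemma ExD Z1 Z2 : bm Z1 -> bm Z2 -> Ex P (fun t => Z1 t + Z2 t) = Ex P Z1 + Ex P Z2.
Proof. by move=> h1 h2; have := RintegralD measurableT (bm_int h1) (bm_int h2); rewrite /Rintegral. Qed.

Lemma ExB Z1 Z2 : bm Z1 -> bm Z2 -> Ex P (fun t => Z1 t - Z2 t) = Ex P Z1 - Ex P Z2.
Proof. by move=> h1 h2; have := RintegralB measurableT (bm_int h1) (bm_int h2); rewrite /Rintegral. Qed.

Lemma ExZ k Z : bm Z -> Ex P (fun t => k * Z t) = k * Ex P Z.
Proof. by move=> h; have := RintegralZl k measurableT (bm_int h); rewrite /Rintegral. Qed.

Lemma Ex_cst k : Ex P (fun _ => k) = k.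
Proof.
transitivity (k * fine (P setT)); first exact: (Rintegral_cst P measurableT k).
by have := probability_setT P; move=> /= ->; rewrite /= mulr1.
Qed.

Lemma Ex_le Z1 Z2 : bm Z1 -> bm Z2 -> (forall t, Z1 t <= Z2 t) -> Ex P Z1 <= Ex P Z2.
Proof. by move=> h1 h2 h; have := le_Rintegral measurableT (bm_int h1) (bm_int h2); rewrite /Rintegral; apply => x _. Qed.

Lemma Ex_ge0 Z : (forall t, 0 <= Z t) -> 0 <= Ex P Z.
Proof. by move=> h; have := Rintegral_ge0 P (D := setT) (f := Z); rewrite /Rintegral; apply => x _. Qed.

Lemma Ex_sum (I : Type) (r : seq I) (F : I -> T -> R) :
  (forall i, bm (F i)) -> Ex P (fun t => \sum_(i <- r) F i t) = \sum_(i <- r) Ex P (F i).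
Proof.
move=> hF; elim: r => [|i r IH].
  by under eq_fun do rewrite big_nil; rewrite big_nil Ex_cst.
under eq_fun do rewrite big_cons; rewrite big_cons ExD ?IH //; exact: bm_sum.
Qed.

Lemma Ex_ext Z1 Z2 : (forall t, Z1 t = Z2 t) -> Ex P Z1 = Ex P Z2.
Proof. by move=> h; congr Ex; apply: funext. Qed.

End tools.

Section real.
Variable R : realType.
Lemma quad_disc (A K B : R) : 0 <= A ->
  (forall l, 0 <= l^+2 * A + 2 * l * K + B) -> K^+2 <= A * B.
Proof.
move=> A0 h; have [Az|Ap] := eqVneq A 0.
  have [Kz|Kn] := eqVneq K 0; first by rewrite Kz Az expr0n mul0r.
  have := h (-(B+1)/(2*K)); rewrite Az mulr0 add0r.
  have -> : 2 * (- (B + 1) / (2 * K)) * K = -(B+1) by field; rewrite Kn.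
  lra.
have Apos : 0 < A by rewrite lt0r Ap.
have := h (-K/A).
have -> : (- K / A) ^+ 2 * A + 2 * (- K / A) * K + B = B - K^+2 / A by field.
rewrite subr_ge0 ler_pdivrMr // mulrC //.
Qed.

Lemma R1 (a b c k : R) : 0 <= a -> 0 <= b -> b <= c -> k^+2 <= a * b ->
  - (Num.sqrt a * (2 * Num.sqrt c + Num.sqrt a)) <= 2 * k - a <=
    Num.sqrt a * (2 * Num.sqrt c - Num.sqrt a).
Proof.
move=> a0 b0 bc kab.
have hk : `|k| <= Num.sqrt a * Num.sqrt c.
  rewrite -sqrtrM // -sqrtr_sqr ler_sqrt; last by apply: mulr_ge0 => //; lra.
  apply: le_trans kab _; apply: ler_wpM2l => //.
have := sqrtr_ge0 a; have := sqrtr_ge0 c; have := sqr_sqrtr a0.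
move: hk; set x := Num.sqrt a; set y := Num.sqrt c => hk ha y0 x0.
rewrite -ha; move: hk.
case: (lerP 0 k) => [k0|k0]; [rewrite ger0_norm // | rewrite ltr0_norm //] => hk.
  by apply/andP; split; nra.
by apply/andP; split; nra.
Qed.
End real.

Ltac bmtac := repeat first [ assumption | apply: bm_cst | apply: bmD | apply: bmB | apply: bmM | apply: bmN ].

Section level.
Context {d : measure_display} {T : measurableType d} {R : realType}.
Variable P : probability T R.
Variable W : T -> R.
Hypothesis hW : forall h : R -> R, bm (fun t => h (W t)).

Lemma bmW (g : T -> R) : (forall s t, W s = W t -> g s = g t) -> bm g.
Proof.
move=> hg; pose h v := g (xget point [set s | W s = v]).
have -> : g = fun t => h (W t).
  apply: funext => t; rewrite /h; apply: hg.
  have := @xgetPex _ point [set s | W s = W t] (ex_intro _ t erefl).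
  by move=> ->.
exact: hW.
Qed.

Definition w v s : R := (W s == v)%:R.

Lemma bm_w v : bm (w v).
Proof. exact: (hW (fun u => (u == v)%:R)). Qed.

Lemma w_ge0 v s : 0 <= w v s.
Proof. by rewrite /w; case: (_ == _). Qed.

Lemma mW : measurable_fun setT W.
Proof. exact: (proj1 (hW (fun u => u))). Qed.

Lemma Ex_ind v : Ex P (w v) = fine (P [set s | W s = v]).
Proof.
have mA : measurable [set s | W s = v].
  by have := mW measurableT _ (measurable_set1 v); rewrite setTI.
transitivity (Ex P (\1_[set s | W s = v])).
  apply: Ex_ext => s; rewrite indicE /w.
  case: (eqVneq (W s) v) => h.
    by rewrite mem_set.
  by rewrite memNset //= => /eqP; rewrite (negbTE h).
by rewrite /Ex integral_indic // setIT.
Qed.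

Lemma cvard_eq Z t : cvard P Z W t =
  Ex P (fun s => (Z s - cexpd P Z W t)^+2 * w (W t) s) / fine (P [set s | W s = W t]).
Proof.
rewrite /cvard {1}/cexpd; congr (_ / _); apply: Ex_ext => s.
rewrite /w; case: (eqVneq (W s) (W t)) => h; last by rewrite !mulr0.
by rewrite /cexpd h.
Qed.

Section E.
Variable v : R.
Let E (F : T -> R) := Ex P (fun s => F s * w v s).

Lemma Ex_sqE S C a b c (F : T -> R) : bm S -> bm C ->
  (forall s, F s = (a * S s + b * C s + c)^+2) ->
  E F = a^+2 * E (fun s => S s * S s) + 2 * a * b * E (fun s => S s * C s)
     + b^+2 * E (fun s => C s * C s) + 2 * a * c * E S + 2 * b * c * E C
     + c^+2 * Ex P (w v).
Proof.
move=> bS bC hF; rewrite /E.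
have bw := bm_w v.
rewrite (@Ex_ext _ _ _ P _ (fun s => a^+2 * (S s * S s * w v s) + 2 * a * b * (S s * C s * w v s)
     + b^+2 * (C s * C s * w v s) + 2 * a * c * (S s * w v s) + 2 * b * c * (C s * w v s)
     + c^+2 * w v s)); last by move=> s; rewrite hF; ring.
rewrite !ExD ?ExZ //; bmtac.
Qed.

Lemma Ex_linE S C a b c (F : T -> R) : bm S -> bm C ->
  (forall s, F s = a * S s + b * C s + c) ->
  E F = a * E S + b * E C + c * Ex P (w v).
Proof.
move=> bS bC hF; rewrite /E.
have bw := bm_w v.
rewrite (@Ex_ext _ _ _ P _ (fun s => a * (S s * w v s) + b * (C s * w v s) + c * w v s));
  last by move=> s; rewrite hF; ring.
rewrite !ExD ?ExZ //; bmtac.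
Qed.
End E.

Lemma core1 S C t : bm S -> bm C -> (forall s, 0 <= C s <= 1) ->
  - (Num.sqrt (cvard P S W t) * (2 * Num.sqrt (cexpd P C W t * (1 - cexpd P C W t))
       + Num.sqrt (cvard P S W t)))
  <= cvard P C W t - cvard P (fun s => S s - C s) W t <=
  Num.sqrt (cvard P S W t) * (2 * Num.sqrt (cexpd P C W t * (1 - cexpd P C W t))
       - Num.sqrt (cvard P S W t)).
Proof.
move=> bS bC C01.
rewrite !cvard_eq.
set v := W t.
set p := fine (P [set s | W s = v]).
have pE : Ex P (w v) = p by rewrite Ex_ind.
have cE Z : cexpd P Z W t = Ex P (fun s => Z s * w v s) / p by [].
rewrite !cE.
set E1 := Ex P (fun s => S s * w v s).
set E2 := Ex P (fun s => C s * w v s).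
set E11 := Ex P (fun s => S s * S s * w v s).
set E12 := Ex P (fun s => S s * C s * w v s).
set E22 := Ex P (fun s => C s * C s * w v s).
have bw := bm_w v.
have sqE a b c F : (forall s, F s = (a * S s + b * C s + c)^+2) ->
    Ex P (fun s => F s * w v s) = a^+2 * E11 + 2 * a * b * E12
     + b^+2 * E22 + 2 * a * c * E1 + 2 * b * c * E2 + c^+2 * p.
  by move=> hF; rewrite (Ex_sqE v S C a b c F bS bC hF) pE.
have eSC : Ex P (fun s => (S s - C s) * w v s) = E1 - E2.
  rewrite (Ex_linE v S C 1 (-1) 0 (fun s => S s - C s) bS bC); last by move=> s /=; ring.
  by rewrite pE /E1 /E2; ring.
rewrite eSC.
have ge0sq F : 0 <= Ex P (fun s => F s ^+ 2 * w v s).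
  by apply: Ex_ge0 => s; apply: mulr_ge0; [exact: sqr_ge0 | exact: w_ge0].
have A0 := ge0sq (fun s => S s - E1 / p).
have B0 := ge0sq (fun s => C s - E2 / p).
rewrite (sqE 1 0 (- (E1 / p))) in A0 *; last by move=> s /=; ring.
rewrite (sqE 0 1 (- (E2 / p))) in B0 *; last by move=> s /=; ring.
rewrite (sqE 1 (-1) (- ((E1 - E2) / p))); last by move=> s /=; ring.
have quad l : 0 <= Ex P (fun s => (l * (S s - E1 / p) + (C s - E2 / p)) ^+ 2 * w v s).
  exact: (ge0sq (fun s => l * (S s - E1 / p) + (C s - E2 / p))).
have E22E2 : E22 <= E2.
  apply: Ex_le; [bmtac| bmtac| move=> s].
  have /andP[c0 c1] := C01 s; apply: ler_wpM2r; first exact: w_ge0.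
  by rewrite -[leRHS]mulr1; apply: ler_wpM2l.
have p0 : 0 <= p by rewrite -pE; apply: Ex_ge0 => s; exact: w_ge0.
case: (eqVneq p 0) => [->|pn0].
  by rewrite !invr0 !mulr0 mul0r sqrtr0 !mul0r oppr0 addr0 lexx.
have pp : 0 < p by rewrite lt0r pn0.
set mS := E1 / p; set mC := E2 / p.
pose A := 1 ^+ 2 * E11 + 2 * 1 * 0 * E12 + 0 ^+ 2 * E22 + 2 * 1 * - mS * E1 +
       2 * 0 * - mS * E2 + (- mS) ^+ 2 * p.
pose B := 0 ^+ 2 * E11 + 2 * 0 * 1 * E12 + 1 ^+ 2 * E22 + 2 * 0 * - mC * E1 +
       2 * 1 * - mC * E2 + (- mC) ^+ 2 * p.
pose K := E12 - mC * E1 - mS * E2 + mS * mC * p.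
have hK : K ^+ 2 <= A * B.
  apply: quad_disc => // l.
  have := quad l; rewrite (sqE l 1 (- (l * mS) - mC)); last by move=> s /=; rewrite /mS /mC; ring.
  move=> h; apply: (le_trans h); rewrite le_eqVlt; apply/orP; left; apply/eqP.
  by rewrite /A /B /K /mS /mC; ring.
have -> : B / p - (1 ^+ 2 * E11 + 2 * 1 * -1 * E12 + (-1) ^+ 2 * E22 +
     2 * 1 * - ((E1 - E2) / p) * E1 + 2 * -1 * - ((E1 - E2) / p) * E2 +
     (- ((E1 - E2) / p)) ^+ 2 * p) / p = 2 * (K / p) - A / p.
  by rewrite /B /A /K /mS /mC; field.
apply: (@R1 _ (A / p) (B / p) (mC * (1 - mC)) (K / p)).
- by apply: divr_ge0.
- by apply: divr_ge0.
- rewrite ler_pdivrMr //.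
  apply: (@le_trans _ _ (E2 - 2 * mC * E2 + mC ^+ 2 * p)).
    by rewrite /B; lra.
  by rewrite le_eqVlt; apply/orP; left; apply/eqP; rewrite /mC; field.
- have -> : (K / p) ^+ 2 = K ^+ 2 / p ^+ 2 by rewrite expr_div_n.
  have -> : A / p * (B / p) = (A * B) / p ^+ 2 by field.
  by rewrite ler_pM2r // invr_gt0 exprn_gt0.
Qed.

Lemma ExN Z : bm Z -> Ex P (fun t => - Z t) = - Ex P Z.
Proof.
move=> bZ; rewrite -mulN1r -ExZ //; apply: Ex_ext => t; by rewrite mulN1r.
Qed.

Lemma part1 S C : bm S -> bm C -> (forall s, 0 <= C s <= 1) ->
    let CB := cexpd P C W in
    let VS := cvard P S W in
    let CL := - Ex P (cvard P (fun t => S t - C t) W) in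
    let GL := Ex P (cvard P C W) in
    - Ex P (fun t => Num.sqrt (VS t) *
               (2 * Num.sqrt (CB t * (1 - CB t)) + Num.sqrt (VS t)))
      <= CL + GL /\
    CL + GL <= Ex P (fun t => Num.sqrt (VS t) *
               (2 * Num.sqrt (CB t * (1 - CB t)) - Num.sqrt (VS t))).
Proof.
move=> bS bC C01 CB VS CL GL.
have b1 : bm (cvard P (fun t => S t - C t) W).
  by apply: bmW => s t H; rewrite /cvard /cexpd H.
have b2 : bm (cvard P C W).
  by apply: bmW => s t H; rewrite /cvard /cexpd H.
have -> : CL + GL = Ex P (fun t => cvard P C W t - cvard P (fun t => S t - C t) W t).
  by rewrite ExB // /CL /GL addrC.
split.
  rewrite -ExN; last by apply: bmW => s t H; rewrite /VS /CB /cvard /cexpd H.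
  apply: Ex_le.
  - by apply: bmW => s t H; rewrite /VS /CB /cvard /cexpd H.
  - exact: bmB.
  - by move=> t; have /andP[] := core1 S C t bS bC C01.
apply: Ex_le.
- exact: bmB.
- by apply: bmW => s t H; rewrite /VS /CB /cvard /cexpd H.
- by move=> t; have /andP[] := core1 S C t bS bC C01.
Qed.

End level.

Section ae.
Context {d : measure_display} {T : measurableType d} {R : realType}.
Variable P : probability T R.

Lemma neg_null (V : T -> R) (D : set T) : measurable D ->
  P.-integrable D (EFin \o V) -> (forall x, D x -> V x < 0) ->
  (0 <= \int[P]_(x in D) (V x)%:E)%E -> {ae P, forall x, ~ D x}.
Proof.
move=> mD iV neg ge.
have i0 : P.-integrable D (EFin \o (fun _ : T => (0:R))).
  exact: (integrableS measurableT mD (subsetT D) (bm_int P (bm_cst 0))).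
have h0 : (\int[P]_(x in D) `|(EFin \o V) x|)%E = 0.
  apply/eqP; rewrite eq_le; apply/andP; split; last first.
    by apply: integral_ge0 => x _; exact: abse_ge0.
  rewrite (eq_integral (fun x => ((0:R)%:E - (V x)%:E)%E)); last first.
    move=> x /set_mem Dx; rewrite /= ltr0_norm ?neg // -EFinB sub0r //.
  rewrite (integralB_EFin mD i0 iV).
  rewrite integral_cst // mul0e sub0e.
  by rewrite leeNl oppe0.
case/integrableP: iV => mV _.
have := (ae_eq_integral_abs P mD mV).1 h0.
apply: filterS => x h Dx; have := neg x Dx; have := h Dx => /= [[->]].
by rewrite ltxx.
Qed.

Lemma ae01 (S : T -> R) (g : R -> R) (Y : T -> R) :
  measurable_fun setT S -> measurable_fun setT g ->
  P.-integrable setT (EFin \o (g \o S)) -> bm Y -> (forall t, 0 <= Y t <= 1) ->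
  (forall A, measurable A ->
    (\int[P]_(x in S @^-1` A) (Y x)%:E = \int[P]_(x in S @^-1` A) ((g \o S) x)%:E)%E) ->
  {ae P, forall x, 0 <= g (S x) <= 1}.
Proof.
move=> mS mg iC bY Y01 hI.
have mpre A : measurable A -> measurable (S @^-1` A).
  by move=> mA; have := mS measurableT _ mA; rewrite setTI.
have mA1 : measurable (g @^-1` `]-oo, 0[%classic).
  by have := mg measurableT _ (measurable_itv `]-oo, 0[); rewrite setTI.
have mA2 : measurable (g @^-1` `]1, +oo[%classic).
  by have := mg measurableT _ (measurable_itv `]1, +oo[); rewrite setTI.
have iY := bm_int P bY.
have i1 := bm_int P (bm_cst 1).
have h1 := @neg_null (g \o S) (S @^-1` (g @^-1` `]-oo, 0[%classic)) (mpre _ mA1)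
  (integrableS measurableT (mpre _ mA1) (subsetT _) iC).
have h2 := @neg_null (fun x => 1 - g (S x)) (S @^-1` (g @^-1` `]1, +oo[%classic)) (mpre _ mA2).
have H1 : {ae P, forall x, ~ (S @^-1` (g @^-1` `]-oo, 0[%classic)) x}.
  apply: h1.
    by move=> x; rewrite /= in_itv /=.
  rewrite -hI //; apply: integral_ge0 => x _; rewrite lee_fin.
  by have /andP[] := Y01 x.
have H2 : {ae P, forall x, ~ (S @^-1` (g @^-1` `]1, +oo[%classic)) x}.
  apply: h2.
  - have iD f : P.-integrable setT (EFin \o f) ->
        P.-integrable (S @^-1` (g @^-1` `]1, +oo[%classic)) (EFin \o f).
      exact: (integrableS measurableT (mpre _ mA2) (subsetT _)).
    have I2 := integrableB (mpre _ mA2) (iD _ i1) (iD _ iC).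
    by apply: (eq_integrable (mpre _ mA2) _ _ _ I2) => x _ /=; rewrite EFinB.
  - by move=> x; rewrite /= in_itv /= andbT subr_lt0.
  - have iD f : P.-integrable setT (EFin \o f) ->
        P.-integrable (S @^-1` (g @^-1` `]1, +oo[%classic)) (EFin \o f).
      exact: (integrableS measurableT (mpre _ mA2) (subsetT _)).
    under eq_integral do rewrite EFinB.
    rewrite (integralB_EFin (mpre _ mA2) (iD _ i1) (iD _ iC)) -hI //.
    rewrite -(integralB_EFin (mpre _ mA2) (iD _ i1) (iD _ iY)).
    apply: integral_ge0 => x _; rewrite lee_fin subr_ge0.
    by have /andP[] := Y01 x.
move: H1 H2; apply: filterS2 => x G1 G2; rewrite !leNgt; apply/andP; split; apply/negP => H.
  by apply: G1; rewrite /= in_itv /=.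
by apply: G2; rewrite /= in_itv /= H.
Qed.

End ae.

Section level2.
Context {d : measure_display} {T : measurableType d} {R : realType}.
Variable P : probability T R.

Lemma Ex_ae Z1 Z2 : measurable_fun setT Z1 -> measurable_fun setT Z2 ->
  {ae P, forall x, Z1 x = Z2 x} -> Ex P Z1 = Ex P Z2.
Proof.
move=> m1 m2 h; rewrite /Ex; congr fine; apply: ae_eq_integral => //.
- exact/measurable_realfun.measurable_EFinP.
- exact/measurable_realfun.measurable_EFinP.
- by move: h; apply: filterS => x h _ /=; rewrite h.
Qed.

Variable W : T -> R.
Hypothesis hW : forall h : R -> R, bm (fun t => h (W t)).

Lemma cexpd_ae Z1 Z2 : measurable_fun setT Z1 -> measurable_fun setT Z2 ->
  {ae P, forall x, Z1 x = Z2 x} -> cexpd P Z1 W = cexpd P Z2 W.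
Proof.
move=> m1 m2 h; apply: funext => t; rewrite /cexpd; congr (_ / _).
have mw := proj1 (bm_w W hW (W t)).
apply: Ex_ae.
- exact: measurable_realfun.measurable_funM.
- exact: measurable_realfun.measurable_funM.
- by move: h; apply: filterS => x ->.
Qed.

Lemma cvard_ae Z1 Z2 : measurable_fun setT Z1 -> measurable_fun setT Z2 ->
  {ae P, forall x, Z1 x = Z2 x} -> cvard P Z1 W = cvard P Z2 W.
Proof.
move=> m1 m2 h; rewrite /cvard (cexpd_ae Z1 Z2 m1 m2 h).
have mc : measurable_fun setT (cexpd P Z2 W).
  have : bm (cexpd P Z2 W) by apply: (bmW W hW) => s t H; rewrite /cexpd H.
  by case.
apply: cexpd_ae.
- apply: measurable_realfun.measurable_funM;
    exact: measurable_realfun.measurable_funB.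
- apply: measurable_realfun.measurable_funM;
    exact: measurable_realfun.measurable_funB.
- by move: h; apply: filterS => x ->.
Qed.

End level2.

Section VMs.
Context {d : measure_display} {T : measurableType d} {R : realType}.
Variable P : probability T R.

Lemma VM (X u : T -> R) m c : bm X -> bm u -> (forall s, 0 <= u s) ->
  Ex P (fun s => X s * u s) = m * Ex P u ->
  Ex P (fun s => (X s - m)^+2 * u s) <= Ex P (fun s => (X s - c)^+2 * u s).
Proof.
move=> bX bu u0 hm.
rewrite -subr_ge0 -ExB; [|bmtac|bmtac].
rewrite (@Ex_ext _ _ _ P _ (fun s => (2 * (m - c)) * (X s * u s) + (c^+2 - m^+2) * u s));
  last by move=> s; ring.
rewrite ExD ?ExZ //; try bmtac.
rewrite hm.
have -> : 2 * (m - c) * (m * Ex P u) + (c ^+ 2 - m ^+ 2) * Ex P u = (m - c)^+2 * Ex P u by ring.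
apply: mulr_ge0; first exact: sqr_ge0.
exact: Ex_ge0.
Qed.

End VMs.

Section bins.
Context {d : measure_display} {T : measurableType d} {R : realType}.
Variable P : probability T R.
Variable S : T -> R.
Hypothesis bS : bm S.
Hypothesis hS01 : forall t, 0 <= S t <= 1.
Variable n : nat.
Variable B : 'I_n -> set R.
Hypothesis hB : interval_partition B.

Let SB := binned P S B.
Let c j := binavg P S (B j).

Lemma bin_ex t : exists j, B j (S t).
Proof.
case: hB => _ [_ hcov].
have : (\bigcup_(j in [set: 'I_n]) B j) (S t) by rewrite hcov /= in_itv /= hS01.
by case=> j _ Bj; exists j.
Qed.

Lemma bin_uniq t i j : B i (S t) -> B j (S t) -> i = j.
Proof.
case: hB => _ [hdis _] Bi Bj; apply/eqP; apply: contraT => ij.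
have : (B i `&` B j) (S t) by [].
by rewrite hdis.
Qed.

Lemma ind_in j t : B j (S t) -> \1_(B j) (S t) = 1 :> R.
Proof. by move=> h; rewrite indicE mem_set. Qed.

Lemma ind_out j t : ~ B j (S t) -> \1_(B j) (S t) = 0 :> R.
Proof. by move=> h; rewrite indicE memNset. Qed.

Lemma comp_SB (h : R -> R) t : h (SB t) = \sum_(j < n) \1_(B j) (S t) * h (c j).
Proof.
have [j0 Bj0] := bin_ex t.
have other i : i != j0 -> \1_(B i) (S t) = 0 :> R.
  move=> ij; apply: ind_out => Bi; move: ij; by rewrite (@bin_uniq t i j0 Bi Bj0) eqxx.
rewrite /SB /binned (bigD1 j0) //= big1 => [|i ij]; last by rewrite other // mul0r.
rewrite (bigD1 j0) //= big1 => [|i ij]; last by rewrite other // mul0r.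
by rewrite ind_in // !mul1r !addr0.
Qed.

Lemma mB j : measurable (B j).
Proof. by case: hB => hI _; exact: measurable_realfun.is_interval_measurable. Qed.

Lemma bm_ind j : bm (fun t => \1_(B j) (S t) : R).
Proof.
split.
  change (measurable_fun setT ((\1_(B j) : R -> R) \o S)).
  exact: (measurableT_comp (measurable_realfun.measurable_indic (R:=R) (D:=setT) (mB j)) (proj1 bS)).
exists 1 => t; rewrite indicE; case: (_ \in _) => /=; by rewrite ?normr1 ?normr0.
Qed.

Lemma hWSB (h : R -> R) : bm (fun t => h (SB t)).
Proof.
have -> : (fun t => h (SB t)) = fun t => \sum_(j < n) \1_(B j) (S t) * h (c j).
  by apply: funext => t; rewrite comp_SB.
apply: bm_sum => j; apply: bmM; [exact: bm_ind | exact: bm_cst].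
Qed.

Lemma Ex_indj j : Ex P (fun t => \1_(B j) (S t)) = fine (P (S @^-1` B j)).
Proof.
have mpre : measurable (S @^-1` B j).
  by have := (proj1 bS) measurableT _ (mB j); rewrite setTI.
transitivity (Ex P (\1_(S @^-1` B j))); first by apply: Ex_ext => s; rewrite !indicE.
by rewrite /Ex integral_indic // setIT.
Qed.

Lemma ind_ge0 j s : 0 <= \1_(B j) (S s) :> R.
Proof. by rewrite indicE; case: (_ \in _). Qed.

Lemma cj_mean j : Ex P (fun s => S s * \1_(B j) (S s)) = c j * Ex P (fun s => \1_(B j) (S s)).
Proof.
rewrite /c /binavg -Ex_indj.
set q := Ex P (fun t => \1_(B j) (S t)).
have bi := bm_ind j.
case: (eqVneq q 0) => [q0|qn0]; last by rewrite divfK.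
rewrite q0 mulr0; apply/eqP; rewrite eq_le; apply/andP; split.
  rewrite -q0; apply: Ex_le; [bmtac | exact: bi | move=> s].
  rewrite -[leRHS]mul1r; apply: ler_wpM2r; first exact: ind_ge0.
  by have /andP[] := hS01 s.
apply: Ex_ge0 => s; apply: mulr_ge0; last exact: ind_ge0.
by have /andP[] := hS01 s.
Qed.

Hypothesis n0 : (0 < n)%N.
Hypothesis hE : forall j : 'I_n,
  B j `<=` `[(j%:R / n%:R), (j.+1%:R / n%:R)]%classic.

Lemma bin_var j : Ex P (fun s => (S s - c j)^+2 * \1_(B j) (S s)) <=
  (4 * n%:R^+2)^-1 * Ex P (fun s => \1_(B j) (S s)).
Proof.
have bi := bm_ind j.
pose a : R := j%:R / n%:R; pose b : R := j.+1%:R / n%:R.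
apply: le_trans (VM P S (fun s => \1_(B j) (S s)) (c j) ((a + b) / 2) bS bi (@ind_ge0 j) (cj_mean j)) _.
rewrite -ExZ //; apply: Ex_le; [bmtac | bmtac | move=> s].
case: (pselect (B j (S s))) => H; last by rewrite ind_out // !mulr0.
rewrite ind_in // !mulr1.
have := hE j (S s) H; rewrite /= in_itv /= -/a -/b => /andP[ha hb].
have nn : n%:R != 0 :> R by rewrite pnatr_eq0 -lt0n.
have -> : (4 * n%:R ^+ 2)^-1 = ((b - a) / 2)^+2 :> R.
  by rewrite /a /b -natr1; field.
nra.
Qed.

Lemma VS_bound t : cvard P S SB t <= (4 * n%:R^+2)^-1.
Proof.
have hW := hWSB.
rewrite (cvard_eq P SB S t).
set v := SB t.
set p := fine (P [set s | SB s = v]).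
have pE : Ex P (w SB v) = p by rewrite (Ex_ind P SB hW v).
have p0 : 0 <= p by rewrite -pE; apply: Ex_ge0 => s; exact: w_ge0.
have e0 : 0 <= (4 * n%:R ^+ 2)^-1 :> R.
  by rewrite invr_ge0; apply: mulr_ge0 => //; exact: sqr_ge0.
case: (eqVneq p 0) => [->|pn]; first by rewrite invr0 mulr0.
have pp : 0 < p by rewrite lt0r pn.
rewrite ler_pdivrMr //.
have bw := bm_w SB hW v.
have mS : Ex P (fun s => S s * w SB v s) = cexpd P S SB t * Ex P (w SB v).
  by rewrite pE divfK.
apply: le_trans (VM P S (w SB v) (cexpd P S SB t) v bS bw (w_ge0 SB v) mS) _.
have dec : Ex P (fun s => (S s - v)^+2 * w SB v s) =
    \sum_(j < n) (c j == v)%:R * Ex P (fun s => (S s - c j)^+2 * \1_(B j) (S s)).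
  transitivity (Ex P (fun s => \sum_(j < n) (c j == v)%:R * ((S s - c j)^+2 * \1_(B j) (S s)))).
    apply: Ex_ext => s.
    have := comp_SB (fun u => (u == v)%:R) s; rewrite /= /w => ->.
    rewrite mulr_sumr; apply: eq_bigr => j _.
    case: eqP => [hv|hv]; last by rewrite !mulr0 mul0r.
    by rewrite hv /= mulr1 mul1r.
  rewrite Ex_sum; last by move=> j; bmtac; exact: bm_ind.
  by apply: eq_bigr => j _; rewrite ExZ //; bmtac; exact: bm_ind.
rewrite dec.
apply: le_trans (_ : \sum_(j < n) (c j == v)%:R * ((4 * n%:R^+2)^-1 *
     Ex P (fun s => \1_(B j) (S s))) <= _).
  by apply: ler_sum => j _; apply: ler_wpM2l => //; exact: bin_var.
rewrite le_eqVlt; apply/orP; left; apply/eqP.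
rewrite -pE.
have -> : w SB v = fun s => \sum_(j < n) (c j == v)%:R * \1_(B j) (S s).
  apply: funext => s; have := comp_SB (fun u => (u == v)%:R) s; rewrite /= /w => ->.
  by apply: eq_bigr => j _; rewrite mulrC.
rewrite Ex_sum; last by move=> j; bmtac; exact: bm_ind.
rewrite mulr_sumr; apply: eq_bigr => j _; rewrite ExZ; last exact: bm_ind.
by rewrite mulrCA.
Qed.

End bins.

Theorem corollary1 (d : measure_display) (T : measurableType d) (R : realType)
  (P : probability T R)
  (dX : measure_display) (TX : measurableType dX) (X : T -> TX)
  (mX : measurable_fun setT X)
  (Y : T -> R) (mY : measurable_fun setT Y) (hY : forall t, Y t = 0 \/ Y t = 1)
  (Q : T -> R) (hQ : is_cond_exp P Y X Q)
  (f : TX -> R) (mf : measurable_fun setT f) (hf : forall x, 0 <= f x <= 1)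
  (C : T -> R) (hC : is_cond_exp P Q (f \o X) C) :
  let S := f \o X in
  (forall (n : nat) (B : 'I_n -> set R), interval_partition B ->
    let SB := binned P S B in
    let CB := cexpd P C SB in
    let VS := cvard P S SB in
    let CL := - Ex P (cvard P (fun t => S t - C t) SB) in
    let GL := Ex P (cvard P C SB) in
    - Ex P (fun t => Num.sqrt (VS t) *
               (2 * Num.sqrt (CB t * (1 - CB t)) + Num.sqrt (VS t)))
      <= CL + GL /\
    CL + GL <= Ex P (fun t => Num.sqrt (VS t) *
               (2 * Num.sqrt (CB t * (1 - CB t)) - Num.sqrt (VS t)))) /\
  (forall (N : nat) (B : 'I_N -> set R), (0 < N)%N -> equal_width_bins B ->
    let SB := binned P S B in
    let CB := cexpd P C SB in
    let CL := - Ex P (cvard P (fun t => S t - C t) SB) in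
    let GL := Ex P (cvard P C SB) in
    - (N%:R)^-1 * Ex P (fun t => Num.sqrt (CB t * (1 - CB t)))
       - (4 * N%:R ^+ 2)^-1 <= CL + GL /\
    CL + GL <= (N%:R)^-1 * Ex P (fun t => Num.sqrt (CB t * (1 - CB t)))).
Proof.
move=> S.
have mS : measurable_fun setT S by exact: measurableT_comp mf mX.
have hS01 : forall t, 0 <= S t <= 1 by move=> t; exact: hf.
have bS : bm S.
  split => //; exists 1 => t; have /andP[h0 h1] := hS01 t; by rewrite ger0_norm.
have Y01 : forall t, 0 <= Y t <= 1 by move=> t; case: (hY t) => ->; rewrite ?lexx ?ler01.
have bY : bm Y.
  split => //; exists 1 => t; have /andP[h0 h1] := Y01 t; by rewrite ger0_norm.
case: hQ => [[gQ [mgQ eQ]] [iQ hIQ]].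
case: hC => [[g [mg eC]] [iC hIC]].
subst C.
have hI : forall A, measurable A ->
    (\int[P]_(x in S @^-1` A) (Y x)%:E = \int[P]_(x in S @^-1` A) ((g \o S) x)%:E)%E.
  move=> A mA.
  have mfA : measurable (f @^-1` A) by have := mf measurableT _ mA; rewrite setTI.
  transitivity (\int[P]_(x in S @^-1` A) (Q x)%:E)%E; first exact: hIQ _ mfA.
  exact: hIC _ mA.
have mC : measurable_fun setT (g \o S) by exact: measurableT_comp mg mS.
have ae := ae01 P S g Y mS mg iC bY Y01 hI.
pose C' t := Order.min 1 (Order.max 0 (g (S t))).
have C'01 : forall t, 0 <= C' t <= 1.
  move=> t; by rewrite /C' le_min ge_min lexx ler01 le_max lexx /= ?orbT.
have mC' : measurable_fun setT C'.
  apply: measurable_realfun.measurable_minr; first exact: measurable_cst.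
  apply: measurable_realfun.measurable_maxr; first exact: measurable_cst.
  exact: mC.
have bC' : bm C'.
  split => //; exists 1 => t; have /andP[h0 h1] := C'01 t; by rewrite ger0_norm.
have aeC : {ae P, forall x, (g \o S) x = C' x}.
  move: ae; apply: filterS => x /andP[h0 h1].
  by rewrite /C' /= max_r // min_r.
have mSC : measurable_fun setT (fun t => S t - (g \o S) t).
  exact: measurable_realfun.measurable_funB.
have mSC' : measurable_fun setT (fun t => S t - C' t).
  exact: measurable_realfun.measurable_funB.
have aeSC : {ae P, forall x, S x - (g \o S) x = S x - C' x}.
  by move: aeC; apply: filterS => x ->.
split.
  move=> n B hB SB CB VS CL GL.
  have hW := hWSB P S bS hS01 n B hB.
  rewrite /CB /CL /GL (cexpd_ae P SB hW _ _ mC mC' aeC) (cvard_ae P SB hW _ _ mC mC' aeC).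
  rewrite (cvard_ae P SB hW _ _ mSC mSC' aeSC).
  exact: (part1 P SB hW S C' bS bC' C'01).
move=> N B N0 [hB hE] SB CB CL GL.
have hW := hWSB P S bS hS01 N B hB.
rewrite /CB /CL /GL (cexpd_ae P SB hW _ _ mC mC' aeC) (cvard_ae P SB hW _ _ mC mC' aeC).
rewrite (cvard_ae P SB hW _ _ mSC mSC' aeSC).
have [h1 h2] := part1 P SB hW S C' bS bC' C'01.
have hE' : forall j : 'I_N, B j `<=` `[(j%:R / N%:R), (j.+1%:R / N%:R)]%classic.
  by move=> j; case: (hE j).
have VSb := VS_bound P S bS hS01 N B hB N0 hE'.
set K := fun t => Num.sqrt (cexpd P C' SB t * (1 - cexpd P C' SB t)).
set VS := cvard P S SB.
have bK : bm K by apply: (bmW SB hW) => s t H; rewrite /K /cexpd H.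
have bVS : bm (fun t => Num.sqrt (VS t)).
  by apply: (bmW SB hW) => s t H; rewrite /VS /cvard /cexpd H.
have Nn : N%:R != 0 :> R by rewrite pnatr_eq0 -lt0n.
have Np : 0 < N%:R :> R by rewrite ltr0n.
pose e : R := (2 * N%:R)^-1.
have e0 : 0 <= e by rewrite /e invr_ge0; apply: mulr_ge0 => //; exact: ltW.
have sb t : 0 <= Num.sqrt (VS t) <= e.
  rewrite sqrtr_ge0 /=.
  have -> : e = Num.sqrt (e ^+ 2) by rewrite sqrtr_sqr ger0_norm.
  rewrite ler_sqrt; last exact: sqr_ge0.
  have -> : e ^+ 2 = (4 * N%:R ^+ 2)^-1 by rewrite /e; field.
  exact: VSb.
have K0 t : 0 <= K t by exact: sqrtr_ge0.
have eN : (N%:R)^-1 = 2 * e :> R by rewrite /e; field.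
have e2 : (4 * N%:R ^+ 2)^-1 = e ^+ 2 :> R by rewrite /e; field.
split.
  apply: le_trans h1.
  have bg1 : bm (fun t => Num.sqrt (VS t) * (2 * K t + Num.sqrt (VS t))).
    by apply: (bmW SB hW) => s t H; rewrite /VS /K /cvard /cexpd H.
  rewrite -(ExN P _ bg1).
  have -> : - (N%:R)^-1 * Ex P K - (4 * N%:R ^+ 2)^-1 =
      Ex P (fun t => - (N%:R)^-1 * K t - (4 * N%:R ^+ 2)^-1).
    by rewrite ExB ?ExZ ?Ex_cst //; bmtac.
  apply: Ex_le; [bmtac | by apply: bmN | ].
  move=> t; rewrite eN e2 -/(K t).
  have /andP[s0 s1] := sb t; have k0 := K0 t.
  move: s0 s1 k0; set x := Num.sqrt (VS t); set k := K t => s0 s1 k0.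
  have : x * (2 * k + x) <= e * (2 * k + e).
    by apply: ler_pM => //; [apply: addr_ge0 => //; apply: mulr_ge0 | apply: lerD].
  move=> hh; have -> : - (2 * e) * k - e ^+ 2 = - (e * (2 * k + e)) by ring.
  by rewrite lerN2.
apply: le_trans h2 _.
rewrite -ExZ //.
apply: Ex_le; [by apply: (bmW SB hW) => s t H; rewrite /VS /K /cvard /cexpd H | bmtac | ].
move=> t; rewrite eN -/(K t).
have /andP[s0 s1] := sb t; have k0 := K0 t.
move: s0 s1 k0; set x := Num.sqrt (VS t); set k := K t => s0 s1 k0.
have h3 : x * k <= e * k by apply: ler_wpM2r.
have h4 : 0 <= x * x by apply: mulr_ge0.
have -> : x * (2 * k - x) = 2 * (x * k) - x * x by ring.
have -> : 2 * e * k = 2 * (e * k) by ring.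
have h5 : 2 * (x * k) <= 2 * (e * k) by rewrite ler_pM2l.
by apply: le_trans h5; rewrite gerBl.
Qed.
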